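(* Let $G_1=(V_1,E_1)$ and $G_2=(V_2,E_2)$ be finite simple graphs with degree sequences $d_1$ and $d_2$. If $d_1$ is a rearrangement of $d_2$ (i.e., there is a bijection $\pi:V_1\to V_2$ with $d_2(\pi(v))=d_1(v)$ for all $v$), then $\dim\mathcal{A}(\widehat G_1)=\dim\mathcal{A}(\widehat G_2)$.
   Context: For a simple graph $G=(V,E)$, $\widehat G$ is the complete graph $(V,\binom{V}{2})$ with pairs in $E$ colored red and other pairs colored blue. For a 2-colored graph $H=(V,F)$, the alternating cone $\mathcal{A}(H)\subseteq\mathbb{R}^F$ is the set of $x\ge0$ such that at each vertex the sum of $x(e)$ over incident red edges equals the sum over incident blue edges. *)

(* Defs.v *)
From mathcomp Require Import all_boot all_order all_algebra.
Set Implicit Arguments. Unset Strict Implicit. Unset Printing Implicit Defensive.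
Import Order.TTheory GRing.Theory Num.Theory.
Local Open Scope ring_scope.

Definition simple_graph (V : finType) (e : rel V) : Prop :=
  symmetric e /\ irreflexive e.

Definition deg (V : finType) (e : rel V) (v : V) : nat := #|[set w | e v w]|.

(* edges of the complete graph on V: the 2-element subsets of V *)
Definition cedge (V : finType) : finType := {A : {set V} | #|A| == 2%N}.

(* in \hat G, the pair A is red iff it is an edge of G *)
Definition red (V : finType) (e : rel V) (A : cedge V) : bool :=
  [exists u, exists w, (val A == [set u; w]) && e u w].

Definition alt_cone (R : realFieldType) (V : finType) (e : rel V)
    (x : {ffun cedge V -> R^o}) : Prop :=
  (forall A, 0 <= x A) /\
  (forall v : V, \sum_(A : cedge V | (v \in val A) && red e A) x A
               = \sum_(A : cedge V | (v \in val A) && ~~ red e A) x A).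

(* U is the linear span of the set C (C contained in U and U spanned by finitely
   many elements of C); such a U is unique, and its dimension is dim C. *)
Definition span_of (R : realFieldType) (T : finType)
    (C : {ffun T -> R^o} -> Prop) (U : {vspace {ffun T -> R^o}}) : Prop :=
  (forall x, C x -> x \in U) /\
  exists s : seq {ffun T -> R^o}, (forall x, x \in s -> C x) /\ (<<s>>%VS = U).

(* Main.v *)
Require Import Defs.
From mathcomp Require Import all_boot all_order all_algebra.
Import Order.TTheory GRing.Theory Num.Theory.
Local Open Scope ring_scope.
From HB Require Import structures.
From Stdlib Require Import Classical.
From mathcomp Require Import zify ring lra.
Set Implicit Arguments. Unset Strict Implicit. Unset Printing Implicit Defensive.

Section LA.
Variable R : realFieldType.

Lemma span_sub (T1 : finType) (C1 C2 : {ffun T1 -> R^o} -> Prop) U1 U2 :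
  (forall x, C1 x -> C2 x) -> span_of C1 U1 -> span_of C2 U2 -> (U1 <= U2)%VS.
Proof.
move=> h [_ [s [hs <-]]] [h2 _]; apply/span_subvP => x /hs /h; exact: h2.
Qed.

Lemma dim_le (T1 T2 : finType) (C1 : {ffun T1 -> R^o} -> Prop) (C2 : {ffun T2 -> R^o} -> Prop) U1 U2
  (f : {linear {ffun T1 -> R^o} -> {ffun T2 -> R^o}}) :
  injective f -> (forall x, C1 x -> C2 (f x)) -> span_of C1 U1 -> span_of C2 U2 ->
  (\dim U1 <= \dim U2)%N.
Proof.
move=> fi hC [_ [s [hs <-]]] [h2 _].
have -> : \dim <<s>> = \dim (linfun f @: <<s>>)%VS.
  rewrite limg_dim_eq //.
  have /eqP -> : lker (linfun f) == 0%VS.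
    by apply/lker0P => x y; rewrite !lfunE; apply: fi.
  by rewrite capv0.
apply: dimvS; rewrite limg_span; apply/span_subvP => y /mapP [x xs ->].
rewrite lfunE; apply: h2; apply: hC; exact: hs.
Qed.

Lemma span_exists (T1 : finType) (C : {ffun T1 -> R^o} -> Prop) : exists U, span_of C U.
Proof.
suff H : forall n (s : seq {ffun T1 -> R^o}), (forall x, x \in s -> C x) ->
   (\dim {: {ffun T1 -> R^o}} - \dim <<s>> <= n)%N -> exists U, span_of C U.
  by apply: (H _ [::]) => //.
elim=> [|n IH] s hs hn.
  exists <<s>>%VS; split; last by exists s.
  move=> x Cx; apply: NNPP => xn.
  have : (\dim <<s>> < \dim <<x :: s>>)%N.
    rewrite ltn_neqAle; have sub : (<<s>> <= <<x :: s>>)%VS.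
      by rewrite span_cons addvSr.
    rewrite (dimvS sub) andbT.
    rewrite (dimv_leqif_eq sub); apply/eqP => e.
    by apply: xn; rewrite e memv_span // mem_head.
  have := dimvS (subvf <<x :: s>>); move: hn; rewrite leqn0 subn_eq0 => hn h1 h2. have := leq_trans h2 (leq_trans h1 hn). by rewrite ltnn.
case: (classic (forall x, C x -> x \in <<s>>%VS)) => [H|].
  by exists <<s>>%VS; split => //; exists s.
move=> /not_all_ex_not [x hx].
have xn : ~ (x \in <<s>>%VS) := fun h => hx (fun _ => h). have Cx : C x by apply: NNPP => nC; apply: hx => /nC.
apply: (IH (x :: s)).
  by move=> y; rewrite in_cons => /orP [/eqP ->|/hs].
have : (\dim <<s>> < \dim <<x :: s>>)%N.
  rewrite ltn_neqAle; have sub : (<<s>> <= <<x :: s>>)%VS.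
    by rewrite span_cons addvSr.
  rewrite (dimvS sub) andbT.
  rewrite (dimv_leqif_eq sub); apply/eqP => e.
  by apply: xn; rewrite e memv_span // mem_head.
have := dimvS (subvf <<x :: s>>); lia.
Qed.
End LA.

Local Close Scope ring_scope.

Section G.
Variable V : finType.

Lemma set2_eq (u w x y : V) :
  ([set u; w] == [set x; y]) = ((u == x) && (w == y)) || ((u == y) && (w == x)).
Proof.
apply/eqP/idP.
  move=> E.
  have ux : u \in [set x; y] by rewrite -E !inE eqxx.
  have wx : w \in [set x; y] by rewrite -E !inE eqxx orbT.
  have xu : x \in [set u; w] by rewrite E !inE eqxx.
  have yu : y \in [set u; w] by rewrite E !inE eqxx orbT.
  move: ux wx xu yu; rewrite !inE.
  move=> h1 h2 h3 h4; repeat match goal with H: is_true (_ || _) |- _ => case/orP: H => /eqP H; subst end; by rewrite ?eqxx ?orbT.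
case/orP => /andP [/eqP -> /eqP ->] //; exact: setUC.
Qed.

Lemma cedgeP (A : cedge V) : exists u w, u != w /\ val A = [set u; w].
Proof. by apply/cards2P; case: A. Qed.

Lemma redE (e : rel V) (A : cedge V) u w : symmetric e -> val A = [set u; w] ->
  red e A = e u w.
Proof.
move=> se hA; apply/existsP/idP.
  case=> u' /existsP [w' /andP [/eqP E h]].
  move: E; rewrite hA => /eqP; rewrite set2_eq.
  by case/orP => /andP [/eqP -> /eqP ->] //; rewrite se.
by move=> h; exists u; apply/existsP; exists w; rewrite hA eqxx h.
Qed.

Definition sw (g : rel V) (p q r s : V) : rel V := fun u w =>
  if ([set u; w] == [set p; q]) || ([set u; w] == [set r; s]) then false
  else if ([set u; w] == [set p; r]) || ([set u; w] == [set q; s]) then u != w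
  else g u w.

Lemma sw_sym g p q r s : symmetric g -> symmetric (sw g p q r s).
Proof. by move=> sg u w; rewrite /sw (setUC [set u]) (sg u w) (eq_sym u w). Qed.

Lemma sw_irr g p q r s : irreflexive g -> irreflexive (sw g p q r s).
Proof. move=> ig u; rewrite /sw eqxx ig. by case: ifP => _ //; case: ifP. Qed.

Lemma red_sw g p q r s (A : cedge V) : symmetric g ->
  red (sw g p q r s) A =
  if (val A == [set p; q]) || (val A == [set r; s]) then false
  else if (val A == [set p; r]) || (val A == [set q; s]) then true
  else red g A.
Proof.
move=> sg; have [u [w [uw hA]]] := cedgeP A.
by rewrite (redE (sw_sym p q r s sg) hA) (redE sg hA) hA /sw uw.
Qed.

Lemma deg_swap (g g' : rel V) v x y :
  (forall w, w != x -> w != y -> g' v w = g v w) ->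
  g v x -> ~~ g' v x -> ~~ g v y -> g' v y -> deg g' v = deg g v.
Proof.
move=> H gx gx' gy gy'.
have xy : x != y by apply: contraNneq gy => <-.
rewrite /deg; have -> : [set w | g' v w] = y |: ([set w | g v w] :\ x).
  apply/setP => w; rewrite !inE.
  have [->|wy] := eqVneq w y; first by rewrite gy'.
  have [->|wx] := eqVneq w x; first by rewrite (negbTE gx').
  by rewrite H.
rewrite cardsU1 (cardsD1 x [set w | g v w]) !inE gx.
rewrite (negbTE gy) andbF /=; lia.
Qed.
End G.

Section G.
Variable V : finType.

Lemma sw_deg (g : rel V) p q r s : symmetric g ->
  p != q -> p != r -> p != s -> q != r -> q != s -> r != s ->
  g p q -> g r s -> ~~ g p r -> ~~ g q s ->
  forall v, deg (sw g p q r s) v = deg g v.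
Proof.
move=> sg pq pr ps qr qs rs gpq grs gpr gqs v.
have qp : q != p by rewrite eq_sym. have rp : r != p by rewrite eq_sym.
have sp : s != p by rewrite eq_sym. have rq : r != q by rewrite eq_sym.
have sq : s != q by rewrite eq_sym. have sr : s != r by rewrite eq_sym.
have E := (negbTE pq, negbTE pr, negbTE ps, negbTE qr, negbTE qs, negbTE rs,
           negbTE qp, negbTE rp, negbTE sp, negbTE rq, negbTE sq, negbTE sr).
have [->|vp] := eqVneq v p.
  apply: (@deg_swap _ _ _ _ q r).
  - by move=> w wq wr; rewrite /sw !set2_eq !eqxx ?E /= ?(negbTE wq) ?(negbTE wr) /= ?andbF.
  - by [].
  - by rewrite /sw !set2_eq !eqxx ?E.
  - by [].
  - by rewrite /sw !set2_eq !eqxx ?E.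
have [->|vq] := eqVneq v q.
  apply: (@deg_swap _ _ _ _ p s).
  - by move=> w wp ws; rewrite /sw !set2_eq !eqxx ?E /= ?(negbTE wp) ?(negbTE ws) /= ?andbF.
  - by rewrite sg.
  - by rewrite /sw !set2_eq !eqxx ?E.
  - by [].
  - by rewrite /sw !set2_eq !eqxx ?E.
have [->|vr] := eqVneq v r.
  apply: (@deg_swap _ _ _ _ s p).
  - by move=> w ws wp; rewrite /sw !set2_eq !eqxx ?E /= ?(negbTE wp) ?(negbTE ws) /= ?andbF.
  - by [].
  - by rewrite /sw !set2_eq !eqxx ?E.
  - by rewrite sg.
  - by rewrite /sw !set2_eq !eqxx ?E.
have [->|vs] := eqVneq v s.
  apply: (@deg_swap _ _ _ _ r q).
  - by move=> w wr wq; rewrite /sw !set2_eq !eqxx ?E /= ?(negbTE wq) ?(negbTE wr) /= ?andbF.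
  - by rewrite sg.
  - by rewrite /sw !set2_eq !eqxx ?E.
  - by rewrite sg.
  - by rewrite /sw !set2_eq !eqxx ?E.
rewrite /deg (_ : [set w | sw g p q r s v w] = [set w | g v w]) //; apply/setP => w; rewrite !inE.
by rewrite /sw !set2_eq (negbTE vp) (negbTE vq) (negbTE vr) (negbTE vs) /=.
Qed.

End G.

Section G.
Variable V : finType.

Definition Rs (g h : rel V) v := [set w | g v w && ~~ h v w].

Lemma RB_card (g h : rel V) v : deg g v = deg h v -> #|Rs g h v| = #|Rs h g v|.
Proof.
rewrite /deg /Rs => E.
have e1 := cardsID [set w | h v w] [set w | g v w].
have e2 := cardsID [set w | g v w] [set w | h v w].
have -> : [set w | g v w && ~~ h v w] = [set w | g v w] :\: [set w | h v w].
  by apply/setP => w; rewrite !inE andbC.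
have -> : [set w | h v w && ~~ g v w] = [set w | h v w] :\: [set w | g v w].
  by apply/setP => w; rewrite !inE andbC.
rewrite setIC in e2; lia.
Qed.

Lemma find_path (g h : rel V) :
  simple_graph g -> simple_graph h -> (forall v, deg g v = deg h v) ->
  forall u0 w0, g u0 w0 != h u0 w0 ->
  exists a b c d, (a != b /\ a != c /\ a != d /\ b != c /\ b != d /\ c != d) /\
    (g a b /\ ~~ h a b /\ h b c /\ ~~ g b c /\ g c d /\ ~~ h c d) /\
    (~~ g a d || h a d).
Proof.
move=> [sg ig] [sh ih] hdeg u0 w0 hne.
have pos0 : (0 < #|Rs g h u0|)%N.
  case E: (g u0 w0) hne => /=.
    move=> hn; apply/card_gt0P; exists w0; rewrite !inE E.
    by move: hn; case: (h u0 w0).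
  move=> hn; rewrite (RB_card (hdeg u0)); apply/card_gt0P; exists w0.
  by rewrite !inE E; move: hn; case: (h u0 w0).
case: (@arg_maxnP V u0 xpredT (fun c => #|Rs g h c|) erefl) => c _ cmax.
have posc : (0 < #|Rs h g c|)%N by rewrite -(RB_card (hdeg c)); apply: leq_trans (cmax u0 erefl).
case/card_gt0P: posc => b; rewrite inE => /andP [hcb gcb].
have posb : (0 < #|Rs g h b|)%N.
  by rewrite (RB_card (hdeg b)); apply/card_gt0P; exists c; rewrite inE sh hcb sg.
case/card_gt0P: posb => a; rewrite inE => /andP [gba hba].
have ab : a != b by apply/eqP => E; move: gba; rewrite E ig.
have ac : a != c by apply/eqP => E; move: gcb; rewrite -E sg gba.
have bc : b != c by apply/eqP => E; move: hcb; rewrite E ih.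
case: (boolP [exists d, (d \in Rs g h c) && (d != a) && (d \notin Rs g h a)]).
  case/existsP => d /andP [/andP [dc da] dna].
  move: dc; rewrite inE => /andP [gcd hcd].
  move: dna; rewrite inE negb_and negbK => had.
  have bd : b != d by apply/eqP => E; move: gcb; rewrite E gcd.
  have cd : c != d by apply/eqP => E; move: gcd; rewrite E ig.
  exists a, b, c, d; rewrite had ab ac bc bd cd (eq_sym a d) da (sg a b) gba (sh a b) hba.
  by rewrite (sh b c) hcb (sg b c) gcb gcd hcd.
move/existsPn => H; exfalso.
pose phi d := if d == a then c else d.
have sub : phi @: Rs g h c \subset Rs g h a :\ b.
  apply/subsetP => x /imsetP [d dc ->]; rewrite /phi.
  have [da|dna] := eqVneq d a.
    move: dc; rewrite da !inE => /andP [gca hca].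
    by rewrite eq_sym bc sg gca sh hca.
  have := H d; rewrite dc dna /= negbK => dRa.
  rewrite !inE; rewrite inE in dRa; rewrite dRa andbT.
  by apply/eqP => E; move: dc; rewrite E inE (negbTE gcb).
have inj : {in Rs g h c &, injective phi}.
  move=> x y xc yc; rewrite /phi.
  have cc : c \notin Rs g h c by rewrite inE ig.
  case: eqVneq => [xa|xa]; case: eqVneq => [ya|ya] //; first by rewrite xa ya.
    by move=> E; rewrite -E in yc; rewrite yc in cc.
  by move=> E; rewrite E in xc; rewrite xc in cc.
have := subset_leq_card sub; rewrite card_in_imset //.
have := cardsD1 b (Rs g h a); rewrite !inE (sg a b) gba (sh a b) hba /=.
have := cmax a erefl; lia.
Qed.
End G.

Section G.
Variable V : finType.

Definition D (g h : rel V) := [set x : V * V | g x.1 x.2 != h x.1 x.2].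

Lemma DC g h : D g h = D h g.
Proof. by apply/setP => x; rewrite !inE eq_sym. Qed.

Lemma D_dec (g g' h : rel V) (P W : {set V * V}) :
  (forall x, x \notin P -> x \notin W -> g' x.1 x.2 = g x.1 x.2) ->
  (forall x, x \in P -> g' x.1 x.2 = h x.1 x.2) ->
  P \subset D g h -> (#|W| < #|P|)%N -> (#|D g' h| < #|D g h|)%N.
Proof.
move=> H1 H2 sP lt.
have sub : D g' h \subset (D g h :\: P) :|: W.
  apply/subsetP => x xD; rewrite in_setU in_setD.
  have [xW|xW] := boolP (x \in W); first by rewrite orbT.
  rewrite orbF.
  have [xP|xP] := boolP (x \in P); first by move: xD; rewrite inE H2 // eqxx.
  by move: xD; rewrite !inE H1.
have h1 := subset_leq_card sub.
have h2 := leq_card_setU (D g h :\: P) W.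
have h3 := cardsD (D g h) P. rewrite (setIidPr sP) in h3.
have h4 := subset_leq_card sP.
set a := #|D g' h| in h1 *. set b := #|D g h :\: P :|: W| in h1 h2.
set c := #|D g h :\: P| in h2 h3. set d := #|D g h| in h3 h4 *.
set e := #|W| in h2 lt. set f := #|P| in h3 h4 lt.
case: h2 => h2 _. lia.
Qed.

Ltac kill_neg :=
  repeat match goal with H : is_true (~~ (_ || _)) |- _ => case/norP: H => ? ? end;
  repeat match goal with H : is_true (~~ ?b) |- context[?b] => rewrite (negbTE H) end.

Ltac splitx := repeat (case/orP; [ move/eqP => -> | idtac ]); try (move/eqP => ->).

Lemma main_comb (PP : rel V -> rel V -> Prop) :
 (forall g h, (forall u w, g u w = h u w) -> PP g h) ->
 (forall g h k, PP g h -> PP h k -> PP g k) ->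
 (forall g h, PP g h -> PP h g) ->
 (forall g p q r s, symmetric g -> irreflexive g ->
    p != q -> p != r -> p != s -> q != r -> q != s -> r != s ->
    g p q -> g r s -> ~~ g p r -> ~~ g q s -> PP g (sw g p q r s)) ->
 forall g h, simple_graph g -> simple_graph h -> (forall v, deg g v = deg h v) -> PP g h.
Proof.
move=> Pext Ptr Psym Psw g h sg sh hdeg.
move: {2}#|D g h| (leqnn #|D g h|) => n.
elim: n g h sg sh hdeg => [|n IH] g h sg sh hdeg hn.
  apply: Pext => u w; case E: (g u w == h u w); first exact/eqP.
  exfalso; have : (0 < #|D g h|)%N by apply/card_gt0P; exists (u, w); rewrite inE E.
  by rewrite ltnNge hn.
case: (set_0Vmem (D g h)) => [D0|[[u0 w0] x0]].
  apply: Pext => u w; case E: (g u w == h u w); first exact/eqP.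
  have : (u, w) \in D g h by rewrite inE E.
  by rewrite D0 inE.
rewrite inE /= in x0.
have [a [b [c [d [[ab [ac [ad [bc [bd cd]]]]] [[gab [hab [hbc [gbc [gcd hcd]]]]] had]]]]]] :=
  find_path sg sh hdeg x0.
case: sg => [sgs sgi]; case: sh => [shs shi].
have ba : b != a by rewrite eq_sym. have ca : c != a by rewrite eq_sym.
have da : d != a by rewrite eq_sym. have cb : c != b by rewrite eq_sym.
have db : d != b by rewrite eq_sym. have dc : d != c by rewrite eq_sym.
have E := (negbTE ab, negbTE ac, negbTE ad, negbTE bc, negbTE bd, negbTE cd,
           negbTE ba, negbTE ca, negbTE da, negbTE cb, negbTE db, negbTE dc).
pose P6 := [set x | x \in [:: (b,a); (a,b); (c,d); (d,c); (b,c); (c,b)]].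
pose W := [set (a,d); (d,a)].
have cP : (#|W| < #|P6|)%N.
  rewrite cards2 cardsE (card_uniqP _).
    by case: (_ != _).
  by rewrite /= !inE !xpair_eqE ?E ?eqxx.
have gba : g b a by rewrite sgs.
have hba : h b a = false by rewrite shs (negbTE hab).
have gcb : g c b = false by rewrite sgs (negbTE gbc).
have hcb : h c b by rewrite shs.
have gdc : g d c by rewrite sgs.
have hdc : h d c = false by rewrite shs (negbTE hcd).
have P6D : P6 \subset D g h.
  apply/subsetP => x; rewrite !inE.
  splitx;
    by rewrite /= ?gab ?(negbTE hab) ?gba ?hba ?gcd ?(negbTE hcd) ?gdc ?hdc ?hbc ?(negbTE gbc) ?hcb ?gcb.
case: (boolP (~~ g a d)) => gad.
  have gda : g d a = false by rewrite sgs (negbTE gad).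
  pose g' := sw g b a c d.
  have Pg : PP g g' by apply: Psw.
  apply: (Ptr _ _ _ Pg); apply: IH.
  - by split; [apply: sw_sym | apply: sw_irr].
  - by split.
  - by move=> v; rewrite sw_deg // -?(negbTE gbc) ?gba.
  rewrite -ltnS; apply: leq_trans hn; apply: (D_dec (P := P6) (W := W)) => //.
    case=> u w; rewrite /= !inE !xpair_eqE => hP hW; rewrite /g' /sw !set2_eq.
    by kill_neg.
  move=> x; rewrite !inE.
  splitx;
    by rewrite /g' /sw !set2_eq !eqxx ?E /= ?hba ?(negbTE hab) ?hcd ?hbc ?hcb ?hdc ?(negbTE hcd).
rewrite (negbTE gad) /= in had; have {gad} gad : g a d by move: gad; rewrite negbK.
pose h' := sw h b c a d.
have had' : h d a by rewrite shs.
have Ph : PP h h' by apply: Psw; rewrite ?(negbTE hab) ?hba ?(negbTE hcd).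
apply: (Ptr _ _ _ _ (Psym _ _ Ph)); apply: IH.
- by split.
- by split; [apply: sw_sym | apply: sw_irr].
- by move=> v; rewrite sw_deg // ?hba ?(negbTE hcd).
rewrite -ltnS; apply: leq_trans hn; rewrite DC (DC g h).
apply: (D_dec (P := P6) (W := W)) => //.
- case=> u w; rewrite /= !inE !xpair_eqE => hP hW; rewrite /h' /sw !set2_eq.
  by kill_neg.
- move=> x; rewrite !inE.
  splitx;
    by rewrite /h' /sw !set2_eq !eqxx ?E /= ?gba ?gab ?gcd ?gdc ?gcb ?(negbTE gbc).
- by rewrite -DC.
Qed.
End G.

Local Open Scope ring_scope.

Definition QS (V : finType) (p q r s : V) : seq {set V} :=
  [:: [set p; q]; [set r; s]; [set p; r]; [set q; s]].

Definition SS (R : realFieldType) (V : finType) (p q r s : V) (x : {ffun cedge V -> R^o}) : R :=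
  \sum_(A : cedge V | val A \in QS p q r s) x A.

Definition Tsw (R : realFieldType) (V : finType) (p q r s : V) (x : {ffun cedge V -> R^o}) :
  {ffun cedge V -> R^o} :=
  [ffun A => if val A \in QS p q r s then SS p q r s x - x A else x A].

Lemma Tsw_lin (R : realFieldType) (V : finType) (p q r s : V) :
  linear (@Tsw R V p q r s).
Proof.
move=> k x y; apply/ffunP => A; rewrite !ffunE.
have -> : SS p q r s (k *: x + y) = k * SS p q r s x + SS p q r s y.
  rewrite /SS mulr_sumr -big_split /=; apply: eq_bigr => B _.
  by rewrite !ffunE.
case: ifP => _ //. rewrite scalerBr.
change (k *: (SS p q r s x : R^o)) with (k * SS p q r s x); change (k *: (x A : R^o)) with (k * x A).
by rewrite opprD addrACA.
Qed.

HB.instance Definition _ (R : realFieldType) (V : finType) (p q r s : V) :=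
  GRing.isLinear.Build R {ffun cedge V -> R^o} {ffun cedge V -> R^o} *:%R
    (@Tsw R V p q r s) (@Tsw_lin R V p q r s).

Section Cone.
Variables (R : realFieldType) (V : finType).

Lemma red_ext (e1 e2 : rel V) A : (forall u w, e1 u w = e2 u w) -> red e1 A = red e2 A.
Proof.
by move=> H; apply: eq_existsb => u; apply: eq_existsb => w; rewrite H.
Qed.

Definition bal (e : rel V) (x : {ffun cedge V -> R^o}) v :=
  \sum_(A : cedge V | v \in val A) (if red e A then x A else - x A).

Lemma bal_alt e (x : {ffun cedge V -> R^o}) v :
  (\sum_(A : cedge V | (v \in val A) && red e A) x A =
   \sum_(A : cedge V | (v \in val A) && ~~ red e A) x A) <-> bal e x v = 0.
Proof.
have -> : bal e x v = \sum_(A : cedge V | (v \in val A) && red e A) x A -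
   \sum_(A : cedge V | (v \in val A) && ~~ red e A) x A.
  rewrite /bal (bigID (fun A => red e A)) /= -sumrN; congr (_ + _).
    by apply: eq_bigr => A /andP [_ ->].
  by apply: eq_bigr => A /andP [_ /negbTE ->].
split; first by move=> ->; rewrite subrr.
by move/eqP; rewrite subr_eq0 => /eqP.
Qed.

Lemma alt_coneE e (x : {ffun cedge V -> R^o}) : alt_cone e x <-> (forall A, 0 <= x A) /\ (forall v, bal e x v = 0).
Proof.
split; case=> h1 h2; split => // v; first by apply/bal_alt.
by apply/bal_alt.
Qed.

Variables (p q r s : V).
Hypotheses (pq : p != q) (pr : p != r) (ps : p != s) (qr : q != r) (qs : q != s) (rs : r != s).

Let cpq : #|[set p; q]| == 2%N. Proof. by rewrite cards2 pq. Qed.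
Let crs : #|[set r; s]| == 2%N. Proof. by rewrite cards2 rs. Qed.
Let cpr : #|[set p; r]| == 2%N. Proof. by rewrite cards2 pr. Qed.
Let cqs : #|[set q; s]| == 2%N. Proof. by rewrite cards2 qs. Qed.
Let Epq : cedge V := @exist {set V} (fun A => #|A| == 2%N) _ cpq.
Let Ers : cedge V := @exist {set V} (fun A => #|A| == 2%N) _ crs.
Let Epr : cedge V := @exist {set V} (fun A => #|A| == 2%N) _ cpr.
Let Eqs : cedge V := @exist {set V} (fun A => #|A| == 2%N) _ cqs.

Let qp : q != p. Proof. by rewrite eq_sym. Qed.
Let rp : r != p. Proof. by rewrite eq_sym. Qed.
Let sp : s != p. Proof. by rewrite eq_sym. Qed.
Let rq : r != q. Proof. by rewrite eq_sym. Qed.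
Let sq : s != q. Proof. by rewrite eq_sym. Qed.
Let sr : s != r. Proof. by rewrite eq_sym. Qed.
Let E := (negbTE pq, negbTE pr, negbTE ps, negbTE qr, negbTE qs, negbTE rs,
           negbTE qp, negbTE rp, negbTE sp, negbTE rq, negbTE sq, negbTE sr).

Lemma QS_mem (A : cedge V) : (val A \in QS p q r s) = (A \in [:: Epq; Ers; Epr; Eqs]).
Proof. by rewrite !inE -!val_eqE. Qed.

Lemma uniqE : uniq [:: Epq; Ers; Epr; Eqs].
Proof. by rewrite -(map_inj_uniq val_inj) /= !inE !set2_eq ?E ?eqxx. Qed.

Lemma sumQ (F : cedge V -> R) :
  \sum_(A : cedge V | val A \in QS p q r s) F A = F Epq + F Ers + F Epr + F Eqs.
Proof.
rewrite (eq_bigl (fun A => A \in [:: Epq; Ers; Epr; Eqs])); last by move=> A; rewrite QS_mem.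
rewrite -big_uniq ?uniqE // !big_cons big_nil /=. by rewrite addr0 !addrA.
Qed.

Lemma cone_sw (g g2 : rel V) : symmetric g -> g p q -> g r s -> ~~ g p r -> ~~ g q s ->
  (forall u w, g2 u w = sw g p q r s u w) ->
  forall x : {ffun cedge V -> R^o}, alt_cone g x -> alt_cone g2 (Tsw p q r s x).
Proof.
move=> sg gpq grs gpr gqs H x /alt_coneE [nn b0]; apply/alt_coneE.
have SSE : forall y, SS p q r s y = y Epq + y Ers + y Epr + y Eqs := fun y => sumQ _.
have R2 : forall A, red g2 A = if (val A == [set p; q]) || (val A == [set r; s]) then false
  else if (val A == [set p; r]) || (val A == [set q; s]) then true else red g A.
  by move=> A; rewrite (red_ext _ H) red_sw.
have r1 : red g Epq by rewrite (@redE _ _ _ p q sg).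
have r2 : red g Ers by rewrite (@redE _ _ _ r s sg).
have r3 : red g Epr = false by rewrite (@redE _ _ _ p r sg) // (negbTE gpr).
have r4 : red g Eqs = false by rewrite (@redE _ _ _ q s sg) // (negbTE gqs).
have s1 : red g2 Epq = false by rewrite R2 /= eqxx.
have s2 : red g2 Ers = false by rewrite R2 /= eqxx orbT.
have s3 : red g2 Epr by rewrite R2 /= !set2_eq ?E ?eqxx.
have s4 : red g2 Eqs by rewrite R2 /= !set2_eq ?E ?eqxx ?orbT.
have t1 : Tsw p q r s x Epq = SS p q r s x - x Epq by rewrite ffunE /= !inE eqxx.
have t2 : Tsw p q r s x Ers = SS p q r s x - x Ers by rewrite ffunE /= !inE eqxx ?orbT.
have t3 : Tsw p q r s x Epr = SS p q r s x - x Epr by rewrite ffunE /= !inE eqxx ?orbT.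
have t4 : Tsw p q r s x Eqs = SS p q r s x - x Eqs by rewrite ffunE /= !inE eqxx ?orbT.
have n1 := nn Epq; have n2 := nn Ers; have n3 := nn Epr; have n4 := nn Eqs.
split.
  move=> A; rewrite ffunE; case: ifP => hA; last exact: nn.
  rewrite SSE; move: hA; rewrite QS_mem !inE.
  by case/or4P => /eqP ->; lra.
move=> v; rewrite -(b0 v) /bal.
rewrite (bigID (fun A => val A \in QS p q r s)) [in RHS](bigID (fun A => val A \in QS p q r s)) /=.
have P1 : \sum_(A : cedge V | (v \in val A) && (val A \in QS p q r s))
     (if red g2 A then Tsw p q r s x A else - Tsw p q r s x A) =
   \sum_(A : cedge V | (v \in val A) && (val A \in QS p q r s))
     (if red g A then x A else - x A).
  rewrite big_mkcondl big_mkcondl !sumQ /= t1 t2 t3 t4 r1 r2 r3 r4 s1 s2 s3 s4 SSE !inE.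
  have [->|vp] := eqVneq v p; first by rewrite ?eqxx ?E /=; ring.
  rewrite /=.
  have [->|vq] := eqVneq v q; first by rewrite ?eqxx ?E /=; ring.
  rewrite /=.
  have [->|vr] := eqVneq v r; first by rewrite ?eqxx ?E /=; ring.
  rewrite /=.
  have [_|vs] := eqVneq v s; first by rewrite /=; ring.
  by rewrite /= !addr0.
have P2 : \sum_(A : cedge V | (v \in val A) && (val A \notin QS p q r s))
     (if red g2 A then Tsw p q r s x A else - Tsw p q r s x A) =
   \sum_(A : cedge V | (v \in val A) && (val A \notin QS p q r s))
     (if red g A then x A else - x A).
  apply: eq_bigr => A /andP [_ hA]; rewrite ffunE (negbTE hA) R2.
  move: hA; rewrite !inE => /norP [h1 /norP [h2 /norP [h3 h4]]].
  by rewrite (negbTE h1) (negbTE h2) (negbTE h3) (negbTE h4).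
by rewrite P1 P2.
Qed.

Lemma Tsw_inj : injective (@Tsw R V p q r s).
Proof.
move=> x y H.
have H' : forall A, Tsw p q r s x A = Tsw p q r s y A by move=> A; rewrite H.
have SSE : forall y, SS p q r s y = y Epq + y Ers + y Epr + y Eqs := fun y => sumQ _.
have t : forall (z : {ffun cedge V -> R^o}) (A : cedge V), val A \in QS p q r s -> Tsw p q r s z A = SS p q r s z - z A.
  by move=> z A hA; rewrite ffunE hA.
have i1 : val Epq \in QS p q r s by rewrite !inE eqxx.
have i2 : val Ers \in QS p q r s by rewrite !inE eqxx ?orbT.
have i3 : val Epr \in QS p q r s by rewrite !inE eqxx ?orbT.
have i4 : val Eqs \in QS p q r s by rewrite !inE eqxx ?orbT.
have e1 := H' Epq; have e2 := H' Ers; have e3 := H' Epr; have e4 := H' Eqs.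
rewrite !t // !SSE in e1 e2 e3 e4.
have d1 : x Epq = y Epq by lra.
have d2 : x Ers = y Ers by lra.
have d3 : x Epr = y Epr by lra.
have d4 : x Eqs = y Eqs by lra.
apply/ffunP => A; have := H' A; rewrite !ffunE; case: ifP => hA //.
by move: hA; rewrite QS_mem !inE; case/or4P => /eqP -> _.
Qed.

End Cone.

Lemma sw_inv (V : finType) (g : rel V) p q r s : symmetric g -> irreflexive g ->
  p != q -> p != r -> p != s -> q != r -> q != s -> r != s ->
  g p q -> g r s -> ~~ g p r -> ~~ g q s ->
  forall u w, g u w = sw (sw g p q r s) p r q s u w.
Proof.
move=> sg ig pq pr ps qr qs rs gpq grs gpr gqs u w.
rewrite /sw.
case B1: ([set u; w] == [set p; r]).
  move: B1; rewrite set2_eq => /orP [] /andP [/eqP -> /eqP ->].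
    by rewrite (negbTE gpr).
  by rewrite sg (negbTE gpr).
case B2: ([set u; w] == [set q; s]) => /=.
  move: B2; rewrite set2_eq => /orP [] /andP [/eqP -> /eqP ->].
    by rewrite (negbTE gqs).
  by rewrite sg (negbTE gqs).
case A1: ([set u; w] == [set p; q]) => /=.
  move: A1; rewrite set2_eq => /orP [] /andP [/eqP -> /eqP ->].
    by rewrite gpq pq.
  by rewrite sg gpq eq_sym pq.
case A2: ([set u; w] == [set r; s]) => //=.
move: A2; rewrite set2_eq => /orP [] /andP [/eqP -> /eqP ->].
  by rewrite grs rs.
by rewrite sg grs eq_sym rs.
Qed.

Lemma psi_card (V1 V2 : finType) (pi : V1 -> V2) (pinj : injective pi) (A : cedge V1) :
  #|pi @: val A| == 2%N.
Proof. by rewrite card_imset //; case: A. Qed.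

Definition psi (V1 V2 : finType) (pi : V1 -> V2) (pinj : injective pi) (A : cedge V1) : cedge V2 :=
  @exist {set V2} (fun B => #|B| == 2%N) (pi @: val A) (psi_card pinj A).

Definition Fiso (R : realFieldType) (V1 V2 : finType) (pi : V1 -> V2) (pinj : injective pi)
  (y : {ffun cedge V2 -> R^o}) : {ffun cedge V1 -> R^o} := [ffun A => y (psi pinj A)].

Lemma Fiso_lin (R : realFieldType) (V1 V2 : finType) (pi : V1 -> V2) (pinj : injective pi) :
  linear (@Fiso R V1 V2 pi pinj).
Proof. by move=> k x y; apply/ffunP => A; rewrite !ffunE. Qed.

HB.instance Definition _ (R : realFieldType) (V1 V2 : finType) (pi : V1 -> V2) (pinj : injective pi) :=
  GRing.isLinear.Build R {ffun cedge V2 -> R^o} {ffun cedge V1 -> R^o} *:%R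
    (@Fiso R V1 V2 pi pinj) (@Fiso_lin R V1 V2 pi pinj).

Section Iso.
Variables (R : realFieldType) (V1 V2 : finType) (pi : V1 -> V2) (g0 : V2 -> V1).
Hypotheses (c1 : cancel pi g0) (c2 : cancel g0 pi).
Let pinj : injective pi := can_inj c1.
Let ginj : injective g0 := can_inj c2.

Lemma psiK : cancel (psi pinj) (psi ginj).
Proof.
move=> A; apply: val_inj => /=.
rewrite -imset_comp (eq_imset _ (fun x => c1 x)); exact: imset_id.
Qed.

Lemma psiK' : cancel (psi ginj) (psi pinj).
Proof.
move=> A; apply: val_inj => /=.
rewrite -imset_comp (eq_imset _ (fun x => c2 x)); exact: imset_id.
Qed.

Lemma Fiso_inj : injective (@Fiso R V1 V2 pi pinj).
Proof.
move=> x y H; apply/ffunP => B.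
have : Fiso pinj x (psi ginj B) = Fiso pinj y (psi ginj B) by rewrite H.
by rewrite !ffunE psiK'.
Qed.

Lemma cone_iso (e2 : rel V2) (e1 : rel V1) : symmetric e2 ->
  (forall u w, e1 u w = e2 (pi u) (pi w)) ->
  forall y : {ffun cedge V2 -> R^o}, alt_cone e2 y -> alt_cone e1 (Fiso pinj y).
Proof.
move=> se2 H y /alt_coneE [nn b0]; apply/alt_coneE; split.
  by move=> A; rewrite ffunE.
have se1 : symmetric e1 by move=> u w; rewrite !H se2.
move=> v; rewrite -(b0 (pi v)) /bal.
rewrite (reindex (psi pinj)) /=; last first.
  by apply: onW_bij; exists (psi ginj); [exact: psiK | exact: psiK'].
apply: eq_big => [A|A _]; first by rewrite mem_imset.
rewrite ffunE; have [u [w [uw hA]]] := cedgeP A.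
have hB : val (psi pinj A) = [set pi u; pi w] by rewrite /= hA imsetU1 imset_set1.
by rewrite (redE se1 hA) (redE se2 hB) H.
Qed.

Lemma deg_iso (e2 : rel V2) v : deg (fun u w => e2 (pi u) (pi w)) v = deg e2 (pi v).
Proof.
rewrite /deg.
have -> : [set w' | e2 (pi v) w'] = pi @: [set w | e2 (pi v) (pi w)].
  apply/setP => w'; apply/idP/imsetP => [hw|[w hw ->]]; last by rewrite inE in hw; rewrite inE.
  by exists (g0 w'); rewrite ?inE c2 //; rewrite inE in hw.
by rewrite card_imset.
Qed.
End Iso.

Section DEs.
Variables (R : realFieldType) (V : finType).

Definition DE (g h : rel V) := forall U1 U2, span_of (@alt_cone R V g) U1 ->
  span_of (@alt_cone R V h) U2 -> \dim U1 = \dim U2.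

Lemma cone_ext (g h : rel V) (x : {ffun cedge V -> R^o}) :
  (forall u w, g u w = h u w) -> alt_cone g x -> alt_cone h x.
Proof.
move=> H /alt_coneE [nn b0]; apply/alt_coneE; split => // v; rewrite -(b0 v).
by apply: eq_bigr => A _; rewrite (red_ext _ H).
Qed.

Lemma DE_ext g h : (forall u w, g u w = h u w) -> DE g h.
Proof.
move=> H U1 U2 s1 s2; apply/eqP; rewrite eqn_leq; apply/andP; split; apply: dimvS.
  by apply: (span_sub _ s1 s2) => x; apply: cone_ext.
by apply: (span_sub _ s2 s1) => x; apply: cone_ext => u w; rewrite H.
Qed.

Lemma DE_trans g h k : DE g h -> DE h k -> DE g k.
Proof.
move=> H1 H2 U1 U3 s1 s3; have [U2 s2] := span_exists (@alt_cone R V h).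
by rewrite (H1 _ _ s1 s2) (H2 _ _ s2 s3).
Qed.

Lemma DE_sym g h : DE g h -> DE h g.
Proof. by move=> H U1 U2 s1 s2; rewrite (H _ _ s2 s1). Qed.

Lemma DE_sw (g : rel V) p q r s : symmetric g -> irreflexive g ->
  p != q -> p != r -> p != s -> q != r -> q != s -> r != s ->
  g p q -> g r s -> ~~ g p r -> ~~ g q s -> DE g (sw g p q r s).
Proof.
move=> sg ig pq pr ps qr qs rs gpq grs gpr gqs U1 U2 s1 s2.
apply/eqP; rewrite eqn_leq; apply/andP; split.
  apply: (dim_le (f := Tsw p q r s)) s1 s2.
    exact: Tsw_inj.
  by apply: cone_sw.
have qp : q != p by rewrite eq_sym.
have rq : r != q by rewrite eq_sym.
have sr : s != r by rewrite eq_sym.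
have sp : s != p by rewrite eq_sym.
have rp : r != p by rewrite eq_sym.
have sq : s != q by rewrite eq_sym.
have E := (negbTE sp, negbTE rp, negbTE sq, negbTE pq, negbTE pr, negbTE ps, negbTE qr, negbTE qs, negbTE rs, negbTE qp, negbTE rq, negbTE sr).
apply: (dim_le (f := Tsw p r q s)) s2 s1.
  exact: Tsw_inj.
apply: cone_sw => //.
- exact: sw_sym.
- by rewrite /sw !set2_eq !eqxx ?E.
- by rewrite /sw !set2_eq !eqxx ?E ?orbT.
- by rewrite /sw !set2_eq !eqxx ?E.
- by rewrite /sw !set2_eq !eqxx ?E ?orbT.
- exact: (sw_inv sg ig pq pr ps qr qs rs gpq grs gpr gqs).
Qed.

Lemma DE_main (g h : rel V) : simple_graph g -> simple_graph h ->
  (forall v, deg g v = deg h v) -> DE g h.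
Proof.
apply: main_comb.
- exact: DE_ext.
- exact: DE_trans.
- exact: DE_sym.
- exact: DE_sw.
Qed.
End DEs.

Theorem lemma2p7 (R : realFieldType) (V1 V2 : finType) (e1 : rel V1) (e2 : rel V2)
  (h1 : simple_graph e1) (h2 : simple_graph e2)
  (pi : V1 -> V2) (hpi : bijective pi)
  (hdeg : forall v : V1, deg e2 (pi v) = deg e1 v) :
  exists (U1 : {vspace {ffun cedge V1 -> R^o}}) (U2 : {vspace {ffun cedge V2 -> R^o}}),
    [/\ span_of (alt_cone e1) U1, span_of (alt_cone e2) U2 & \dim U1 = \dim U2].
Proof.
have [U1 s1] := span_exists (@alt_cone R V1 e1).
have [U2 s2] := span_exists (@alt_cone R V2 e2).
exists U1, U2; split => //.
case: hpi => g0 c1 c2.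
pose e2' := fun u w => e2 (pi u) (pi w).
case: h2 => se2 ie2.
have h2' : simple_graph e2' by split => [u w|u]; rewrite /e2' ?ie2 // se2.
have [U' s'] := span_exists (@alt_cone R V1 e2').
rewrite (DE_main h1 h2' _ s1 s'); last first.
  by move=> v; rewrite (deg_iso c1 c2) hdeg.
apply/eqP; rewrite eqn_leq; apply/andP; split.
  apply: (dim_le (f := Fiso (can_inj c2))) s' s2.
    exact: Fiso_inj.
  apply: cone_iso => //.
  - by move=> u w; rewrite /e2'.
  - by move=> u w; rewrite /e2' !c2.
apply: (dim_le (f := Fiso (can_inj c1))) s2 s'.
  exact: Fiso_inj.
by apply: cone_iso.
Qed.
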